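(* Let $\bar x_1,\dots,\bar x_k\in\mathfrak M$ and suppose the product $\bar x_1\bar x_2\cdots\bar x_k$ is increasing. Then there exists $i\in\{1,\dots,k-1\}$ such that $\bar x_i\bar x_{i+1}$ is increasing; moreover, for all $1\le r\le i$ and $i<r'\le k$, the product $\bar x_r\bar x_{r+1}\cdots\bar x_{r'}$ is increasing.
   Context: Fix a deterministic automaton with finite state set $Q$, alphabet $\Sigma$ and transition function $\delta$. Elements of $\mathfrak M$ are directed graphs on vertex set $Q$ whose edges are labelled by subsets of $Q$. The product $\bar x\cdot\bar y$ has an edge $q_1\xrightarrow{S_1\cup S_2}q_2$ iff there is $q'$ with an edge $q_1\xrightarrow{S_1}q'$ in $\bar x$ and $q'\xrightarrow{S_2}q_2$ in $\bar y$. For $a\in\Sigma$, $h(a)$ has an edge $q_1\xrightarrow{\{q_1,q_2\}}q_2$ iff $\delta(q_1,a)=q_2$. $\mathfrak M$ is the monoid generated by $\{h(a):a\in\Sigma\}$ together with the identity element $h(\epsilon)$ (edges $q\xrightarrow{\{q\}}q$). In every element of $\mathfrak M$ each $q\in Q$ has exactly one outgoing edge; its label is called the set of states seen from $q$. A product $\bar x=\bar x_1\cdots\bar x_k$ is increasing if there exists $q\in Q$ such that the set of states seen from $q$ in $\bar x_1$ is a strict subset of the set of states seen from $q$ in $\bar x$. *)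

(* Defs.v *)
From mathcomp Require Import all_boot.
Set Implicit Arguments. Unset Strict Implicit. Unset Printing Implicit Defensive.

Section Graphs.
Variables (Q Sigma : finType) (delta : Q -> Sigma -> Q).

(* An element of M: a set of labelled edges (q1, S, q2), encoded as ((q1, S), q2). *)
Definition elt := {set (Q * {set Q}) * Q}.

Definition gmul (x y : elt) : elt :=
  [set e | [exists q' : Q, exists S1 : {set Q}, exists S2 : {set Q},
     [&& ((e.1.1, S1), q') \in x, ((q', S2), e.2) \in y & e.1.2 == S1 :|: S2]]].

Definition hlet (a : Sigma) : elt :=
  [set e | (delta e.1.1 a == e.2) && (e.1.2 == [set e.1.1; e.2])].

Definition hid : elt := [set e | (e.2 == e.1.1) && (e.1.2 == [set e.1.1])].

Definition hword (w : seq Sigma) : elt := foldr (fun a acc => gmul (hlet a) acc) hid w.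

Definition inM (x : elt) : Prop := exists w : seq Sigma, x = hword w.

(* Set of states seen from q in x: the label of the (unique) outgoing edge of q. *)
Definition seen (x : elt) (q : Q) : {set Q} :=
  odflt set0 [pick S : {set Q} | [exists q' : Q, ((q, S), q') \in x]].

Definition gprod (xs : seq elt) : elt := foldr gmul hid xs.

Definition increasing (xs : seq elt) : Prop :=
  exists q : Q, seen (head hid xs) q \proper seen (gprod xs) q.

(* The factors x_r, ..., x_r' (1-based indices) of xs. *)
Definition slice (xs : seq elt) (r r' : nat) : seq elt :=
  take (r'.+1 - r) (drop r.-1 xs).

End Graphs.

(* Main.v *)
Require Import Defs.
From mathcomp Require Import all_boot.
From mathcomp Require Import zify.
Set Implicit Arguments. Unset Strict Implicit. Unset Printing Implicit Defensive.

Section Aux.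
Variable Q : finType.

Definition mk (f : {ffun Q -> Q}) (L : {ffun Q -> {set Q}}) : elt Q :=
  [set e | (e.2 == f e.1.1) && (e.1.2 == L e.1.1)].
Definition good (x : elt Q) := exists f L, x = mk f L /\ forall q, (q \in L q) && (f q \in L q).
Definition dest (x : elt Q) q := odflt q [pick q' | [exists S : {set Q}, ((q,S),q') \in x]].
Definition allgood (s : seq (elt Q)) := forall x, x \in s -> good x.

Lemma gmul_mk f1 L1 f2 L2 : gmul (mk f1 L1) (mk f2 L2) =
  mk [ffun q => f2 (f1 q)] [ffun q => L1 q :|: L2 (f1 q)].
Proof.
apply/setP => -[[q1 S] q2]; rewrite !inE /= !ffunE.
apply/existsP/andP.
- case=> q' /existsP[S1 /existsP[S2 /and3P[h1 h2 /eqP->]]].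
  move: h1 h2; rewrite !inE /= => /andP[/eqP-> /eqP->] /andP[/eqP-> /eqP->]. by split.
- case=> /eqP-> /eqP->. exists (f1 q1); apply/existsP; exists (L1 q1);
  apply/existsP; exists (L2 (f1 q1)); by rewrite !inE /= !eqxx.
Qed.

Lemma seen_mk f L q : seen (mk f L) q = L q.
Proof.
rewrite /seen; case: pickP => [S /existsP[q' ]|H] /=.
- by rewrite inE /= => /andP[_ /eqP].
- have := H (L q); rewrite /= => /negbT /existsPn /(_ (f q)); by rewrite inE /= !eqxx.
Qed.

Lemma dest_mk f L q : dest (mk f L) q = f q.
Proof.
rewrite /dest; case: pickP => [q' /existsP[S ]|H] /=.
- by rewrite inE /= => /andP[/eqP].
- have := H (f q); rewrite /= => /negbT /existsPn /(_ (L q)); by rewrite inE /= !eqxx.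
Qed.

Lemma hid_mk : @hid Q = mk [ffun q => q] [ffun q => [set q]].
Proof. apply/setP => -[[q1 S] q2]; by rewrite !inE !ffunE. Qed.

Lemma seen_hid q : seen (@hid Q) q = [set q].
Proof. by rewrite hid_mk seen_mk ffunE. Qed.
Lemma dest_hid q : dest (@hid Q) q = q.
Proof. by rewrite hid_mk dest_mk ffunE. Qed.

Lemma good_gmul x y : good x -> good y -> good (gmul x y).
Proof.
move=> [f1 [L1 [-> H1]]] [f2 [L2 [-> H2]]].
rewrite gmul_mk; do 2 eexists; split; first reflexivity.
move=> q; rewrite !ffunE !inE. have /andP[a b] := H1 q; have /andP[c d] := H2 (f1 q).
by rewrite a d orbT.
Qed.

Lemma good_hid : good (@hid Q).
Proof.
exists [ffun q => q], [ffun q => [set q]]; split; first exact hid_mk.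
move=> q; by rewrite !ffunE !inE eqxx.
Qed.

Lemma good_hlet (Sigma : finType) (delta : Q -> Sigma -> Q) a : good (@hlet Q Sigma delta a).
Proof.
exists [ffun q => delta q a], [ffun q => [set q; delta q a]]; split.
- apply/setP => -[[q1 S] q2]; rewrite !inE !ffunE /=.
  by case: eqVneq => [->|] //=; rewrite eqxx.
- move=> q; by rewrite !ffunE !inE !eqxx orbT.
Qed.

Lemma good_hword (Sigma : finType) (delta : Q -> Sigma -> Q) w : good (hword delta w).
Proof.
elim: w => [|a w IH] /=; first exact good_hid.
exact: good_gmul (good_hlet _ _) IH.
Qed.

Lemma seen_gmul x y q : good x -> good y -> seen (gmul x y) q = seen x q :|: seen y (dest x q).
Proof.
move=> [f1 [L1 [-> _]]] [f2 [L2 [-> _]]]; by rewrite gmul_mk !seen_mk dest_mk ffunE.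
Qed.

Lemma dest_gmul x y q : good x -> good y -> dest (gmul x y) q = dest y (dest x q).
Proof.
move=> [f1 [L1 [-> _]]] [f2 [L2 [-> _]]]; by rewrite gmul_mk !dest_mk ffunE.
Qed.

Lemma seen_in x q : good x -> (q \in seen x q) && (dest x q \in seen x q).
Proof. move=> [f [L [-> H]]]; by rewrite seen_mk dest_mk. Qed.

Lemma allgood_sub s1 s2 : {subset s1 <= s2} -> allgood s2 -> allgood s1.
Proof. move=> H G x hx; exact: G (H _ hx). Qed.

Lemma good_gprod xs : allgood xs -> good (gprod xs).
Proof.
elim: xs => [|x xs IH] H /=; first exact good_hid.
apply good_gmul; first by apply H; exact: mem_head.
apply IH => y hy; apply H; by rewrite inE hy orbT.
Qed.

Lemma allgood_catl s1 s2 : allgood (s1 ++ s2) -> allgood s1.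
Proof. apply allgood_sub => z hz; by rewrite mem_cat hz. Qed.
Lemma allgood_catr s1 s2 : allgood (s1 ++ s2) -> allgood s2.
Proof. apply allgood_sub => z hz; by rewrite mem_cat hz orbT. Qed.
Lemma allgood_cons x s : allgood (x :: s) -> good x /\ allgood s.
Proof.
move=> H; split; first by apply H; exact: mem_head.
apply: allgood_sub H => z hz; by rewrite inE hz orbT.
Qed.

Lemma seen_gprod_cat xs ys q : allgood (xs ++ ys) ->
  seen (gprod (xs ++ ys)) q = seen (gprod xs) q :|: seen (gprod ys) (dest (gprod xs) q).
Proof.
elim: xs q => [|x xs IH] q H /=.
- rewrite seen_hid dest_hid; apply/esym/setUidPr; rewrite sub1set.
  by have /andP[] := seen_in q (good_gprod H).
- have [Hx Hr] := allgood_cons H.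
  have Hxs := good_gprod (allgood_catl Hr).
  have Hxy := good_gprod Hr.
  by rewrite seen_gmul // IH // seen_gmul // dest_gmul // setUA.
Qed.

Lemma dest_gprod_cat xs ys q : allgood (xs ++ ys) ->
  dest (gprod (xs ++ ys)) q = dest (gprod ys) (dest (gprod xs) q).
Proof.
elim: xs q => [|x xs IH] q H /=.
- by rewrite dest_hid.
- have [Hx Hr] := allgood_cons H.
  have Hxs := good_gprod (allgood_catl Hr).
  have Hxy := good_gprod Hr.
  by rewrite dest_gmul // IH // dest_gmul.
Qed.

Lemma seen_gprod1 x q : good x -> seen (gprod [:: x]) q = seen x q.
Proof.
move=> Hx; have Hh := @good_hid.
rewrite /= seen_gmul // seen_hid.
apply/setUidPl; rewrite sub1set; by have /andP[] := seen_in q Hx.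
Qed.

Lemma keyK post : forall pre q, allgood (pre ++ post) -> pre != [::] ->
  ~~ (seen (gprod (pre ++ post)) q \subset seen (gprod pre) q) ->
  exists pre' c post', pre ++ post = pre' ++ c :: post' /\ pre' != [::] /\
    ~~ (seen c (dest (gprod pre') q) \subset seen (gprod pre') q).
Proof.
elim: post => [|c post IH] pre q Hg Hne Hns.
- by rewrite cats0 subxx in Hns.
- case Hc: (seen c (dest (gprod pre) q) \subset seen (gprod pre) q); last first.
    exists pre, c, post; split => //; split => //; by rewrite Hc.
  have Hg' : allgood (pre ++ [:: c]).
    apply: allgood_sub Hg => z; rewrite !mem_cat !inE => /orP[->//|->]; by rewrite orbT.
  have Hc' : good c by apply Hg; rewrite mem_cat inE eqxx orbT.
  have E : seen (gprod (pre ++ [:: c])) q = seen (gprod pre) q.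
    rewrite seen_gprod_cat // seen_gprod1 //; exact/setUidPl.
  have := IH (pre ++ [:: c]) q; rewrite -catA /= => IH'.
  apply IH' => //; first by case: (pre) Hne.
  by rewrite E.
Qed.

End Aux.

Theorem mainTheorem14 (Q Sigma : finType) (delta : Q -> Sigma -> Q)
    (xs : seq (elt Q)) :
  (forall x, x \in xs -> inM delta x) ->
  increasing xs ->
  exists i : nat,
    [/\ 1 <= i <= (size xs).-1,
        increasing (slice xs i i.+1)
      & forall r r' : nat, 1 <= r <= i -> i < r' <= size xs ->
          increasing (slice xs r r')].
Proof.
move=> HM [q Hq].
have Hg : allgood xs.
  move=> x hx; have [w ->] := HM x hx; exact: good_hword.
case: xs Hq Hg HM => [|x0 rest] Hq Hg _; first by rewrite /= properxx in Hq.
have Hx0 : good x0 by apply Hg; exact: mem_head.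
have := @keyK _ rest [:: x0] q Hg isT.
rewrite seen_gprod1 //.
case.
  by move: Hq; rewrite properE => /andP[_ h].
move=> pre [c [post [E [Hne Hc]]]].
move: E Hg; rewrite cat1s => -> Hg.
have G : forall r r', 1 <= r <= size pre -> size pre < r' <= size (pre ++ c :: post) ->
    increasing (slice (pre ++ c :: post) r r').
  move=> r r' /andP[r1 ri] /andP[ir r'k].
  set a := take r.-1 pre; set b := drop r.-1 pre.
  have [d [Ed Hd]] : exists d, slice (pre ++ c :: post) r r' = b ++ c :: d /\ {subset d <= post}.
    rewrite /slice drop_cat ifT; last by lia.
    rewrite take_cat ifF; last by rewrite size_drop; lia.
    have : 0 < r'.+1 - r - size b by rewrite size_drop; lia.
    case: (r'.+1 - r - size b) => // m _ /=. exists (take m post); split => //.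
    exact: mem_take.
  have Hpre : pre = a ++ b by rewrite cat_take_drop.
  have Hgp : allgood pre := allgood_catl Hg.
  have Hgab : allgood (a ++ b) by rewrite -Hpre.
  have Hgb : allgood b := allgood_catr Hgab.
  have Hgbcd : allgood (b ++ c :: d).
    apply: allgood_sub Hg => z; rewrite !mem_cat !inE => /orP[hz|/orP[->|hz]].
    - by rewrite (mem_drop hz).
    - by rewrite orbT.
    - by rewrite (Hd _ hz) !orbT.
  have Hgcd : allgood (c :: d) := allgood_catr Hgbcd.
  have Hcg : good c := (allgood_cons Hgcd).1.
  case Hb: b Hgb Hgbcd => [|x1 b'] Hgb Hgbcd.
    have hr : r.-1 < size pre by apply: leq_trans ri; rewrite ltn_predL.
    by move: Hb; rewrite /b => /eqP; rewrite -size_eq0 size_drop subn_eq0 leqNgt hr.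
  have [Hx1 Hgb'] := allgood_cons Hgb.
  rewrite Ed Hb; exists (dest (gprod a) q) => /=.
  set t := dest (gprod a) q.
  have F1 : seen (gprod pre) q = seen (gprod a) q :|: seen (gprod b) t.
    by rewrite {1}Hpre seen_gprod_cat.
  have F2 : dest (gprod pre) q = dest (gprod b) t.
    by rewrite {1}Hpre dest_gprod_cat.
  have F3 : seen (gprod (b ++ c :: d)) t =
      seen (gprod b) t :|: seen (gprod (c :: d)) (dest (gprod b) t).
    by rewrite seen_gprod_cat // Hb.
  have F4 : seen (gprod (c :: d)) (dest (gprod b) t) =
      seen c (dest (gprod b) t) :|: seen (gprod d) (dest c (dest (gprod b) t)).
    by rewrite /= seen_gmul //; apply: good_gprod; exact: (allgood_cons Hgcd).2.
  have F5 : seen (gprod b) t = seen x1 t :|: seen (gprod b') (dest x1 t).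
    by rewrite Hb /= seen_gmul //; apply: good_gprod.
  have Eg : seen (gmul x1 (gprod (b' ++ c :: d))) t = seen (gprod (b ++ c :: d)) t
    by rewrite Hb.
  rewrite properE Eg F3 F4 F5; apply/andP; split.
    by rewrite -setUA subsetUl.
  apply/negP => H; move/negP: Hc; apply.
  rewrite F1 F2; apply: subset_trans (subsetUr _ _).
  rewrite F5; apply: subset_trans (subsetUl _ _).
  apply: subset_trans H; rewrite -setUA; apply: subset_trans (subsetUr _ _).
  apply: subset_trans (subsetUr _ _); exact: subsetUl.
exists (size pre); split.
- rewrite size_cat /=; case: (pre) Hne => //= ? ? _; lia.
- apply G; rewrite ?size_cat /=; case: (pre) Hne => //= ? ? _; lia.
- exact: G.
Qed.
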